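(* Let $X$ be a compact Hausdorff space with a continuous injective right action of $P$ such that $X\rtimes P$ admits a Haar system, and put $X_0:=X\,Int(P)=\{xb:x\in X,\ b\in Int(P)\}$. Let $a\in P$ and let $(U_n)$ be a decreasing sequence of open subsets of $G$ with $\bigcap_n U_n=\{a\}$ such that every open $U\ni a$ contains $U_n$ for all large $n$. For each $n$ choose $f_n\in C_c(G)$ with $f_n\ge 0$, $\int f_n(g)\,dg=1$ and $\mathrm{supp}(f_n)\subset U_n\cap Int(P)a$ (this set is nonempty), and define $F_n\in C(X)$ by $F_n(x)=\int f_n(g)1_{Q_x}(g^{-1})\,dg$. Then $F_n$ converges pointwise on $X$ to the indicator function $1_{X_0a}$ of $X_0a=\{ya:y\in X_0\}$.
   Context: Standing assumptions: $G$ is a second countable locally compact group with left Haar measure $dg$; $P\subset G$ is a closed subsemigroup with identity $e\in P$, such that $G=PP^{-1}$ and the interior $Int(P)$ of $P$ is dense in $P$. Semidirect product groupoid: for a compact Hausdorff space $X$ with a continuous right action of $P$ such that each $x\mapsto xa$ is injective, $X\rtimes P:=\{(x,g)\in X\times G:\exists a,b\in P,\ y\in X \text{ with } g=ab^{-1},\ xa=yb\}$ (the point $y$ is then unique; write $(x,g,y)$), with the subspace topology of $X\times G$, product $(x,g,y)(y,h,z)=(x,gh,z)$ and inverse $(x,g,y)^{-1}=(y,g^{-1},x)$. For $x\in X$, $Q_x:=\{g\in G:(x,g)\in X\rtimes P\}$ and $\lambda^x$ is the measure with $\int\phi\,d\lambda^x=\int\phi(x,g)1_{Q_x}(g)\,dg$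 for $\phi\in C_c(X\rtimes P)$. ''$X\rtimes P$ admits a Haar system'' means $(\lambda^x)_{x\in X}$ is a Haar system, i.e. $x\mapsto\int\phi\,d\lambda^x$ is continuous for all $\phi\in C_c(X\rtimes P)$. *)

(* Defs.v *)
From HB Require Import structures.
From mathcomp Require Import all_boot all_order all_algebra.
From mathcomp Require Import all_classical all_reals all_analysis.
Set Implicit Arguments.
Unset Strict Implicit.
Unset Printing Implicit Defensive.
Import Order.TTheory GRing.Theory Num.Theory.
Import numFieldNormedType.Exports.
Local Open Scope classical_set_scope.
Local Open Scope ring_scope.

Definition borel (T : ptopologicalType) := g_sigma_algebraType (@open T).

Record lcsc_group (G : ptopologicalType) (mul : G -> G -> G) (inv : G -> G)
    (e : G) : Prop := LCSCGroup {
  grp_assoc : forall x y z, mul x (mul y z) = mul (mul x y) z;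
  grp_unit : forall x, mul e x = x /\ mul x e = x;
  grp_inv : forall x, mul (inv x) x = e /\ mul x (inv x) = e;
  grp_mul_cont : continuous (fun z : G * G => mul z.1 z.2);
  grp_inv_cont : continuous inv;
  grp_hausdorff : hausdorff_space G;
  grp_loc_compact : locally_compact [set: G];
  grp_second_countable : @second_countable G }.

(* mu is a left Haar measure on the Borel sets of G: left invariant, finite on
   compact sets, positive on nonempty open sets (regularity is automatic for
   locally finite Borel measures on a second countable LCH space). *)
Record left_haar (R : realType) (G : ptopologicalType) (mul : G -> G -> G)
    (mu : {measure set (borel G) -> \bar R}) : Prop := LeftHaar {
  haar_left_inv : forall (g : G) (A : set (borel G)), measurable A ->
    mu [set mul g x | x in A] = mu A;
  haar_compact : forall K : set G, compact K -> (mu K < +oo)%E;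
  haar_open : forall U : set G, open U -> U !=set0 -> (0 < mu U)%E }.

Record semigroup_cond (G : ptopologicalType) (mul : G -> G -> G)
    (inv : G -> G) (e : G) (P : set G) : Prop := SemigroupCond {
  P_closed : closed P;
  P_e : P e;
  P_mul : forall a b, P a -> P b -> P (mul a b);
  P_gen : forall g, exists a b, [/\ P a, P b & g = mul a (inv b)];
  P_dense : P `<=` closure (interior P) }.

(* A continuous right action of P on X with injective maps x |-> x a.
   [act x a] stands for x a (only its values for a in P matter). *)
Record right_action (X : topologicalType) (G : ptopologicalType)
    (mul : G -> G -> G) (e : G) (P : set G) (act : X -> G -> X) : Prop :=
  RightAction {
  act_e : forall x, act x e = x;
  act_mul : forall x a b, P a -> P b -> act (act x a) b = act x (mul a b);
  act_cont : {within [set z : X * G | P z.2], continuous (fun z => act z.1 z.2)};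
  act_inj : forall a, P a -> injective (fun x => act x a) }.

Definition semidirect (X : topologicalType) (G : ptopologicalType)
    (mul : G -> G -> G) (inv : G -> G) (P : set G) (act : X -> G -> X)
    : set (X * G) :=
  [set z | exists a b y, [/\ P a, P b, z.2 = mul a (inv b) & act z.1 a = act y b]].

Definition Qset (X : topologicalType) (G : ptopologicalType)
    (mul : G -> G -> G) (inv : G -> G) (P : set G) (act : X -> G -> X)
    (x : X) : set G :=
  [set g | semidirect mul inv P act (x, g)].

Definition Cc_on (R : realType) (T : topologicalType) (S : set T)
    (phi : T -> R) : Prop :=
  {within S, continuous phi} /\
  exists K : set T, [/\ compact K, K `<=` S & forall z, S z -> ~ K z -> phi z = 0].

Definition admits_haar_system (R : realType) (X : topologicalType)
    (G : ptopologicalType) (mul : G -> G -> G) (inv : G -> G) (P : set G)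
    (act : X -> G -> X) (mu : {measure set (borel G) -> \bar R}) : Prop :=
  forall phi : X * G -> R, Cc_on (semidirect mul inv P act) phi ->
    continuous (fun x : X =>
      (\int[mu]_g (phi (x, g) * \1_(Qset mul inv P act x) g)%:E)%E).

Definition X0a (X : topologicalType) (G : ptopologicalType) (P : set G)
    (act : X -> G -> X) (a : G) : set X :=
  [set y | exists x b, interior P b /\ y = act (act x b) a].

(* Main.v *)
Require Import Defs.
From HB Require Import structures.
From mathcomp Require Import all_boot all_order all_algebra.
From mathcomp Require Import all_classical all_reals all_analysis.
Import Order.TTheory GRing.Theory Num.Theory.
Import numFieldNormedType.Exports.
Local Open Scope classical_set_scope.
Local Open Scope ring_scope.
Lemma mulr_cont (G : topologicalType) (mul : G -> G -> G) (c : G) :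
  continuous (fun z : G * G => mul z.1 z.2) -> continuous (fun g => mul g c).
Proof.
move=> H x.
have := @continuous_comp _ _ _ (fun g => (g, c)) (fun z : G * G => mul z.1 z.2) x.
apply; last exact: H.
by apply: cvg_pair; [exact: cvg_id | exact: cvg_cst].
Qed.
Lemma mull_cont (G : topologicalType) (mul : G -> G -> G) (c : G) :
  continuous (fun z : G * G => mul z.1 z.2) -> continuous (fun g => mul c g).
Proof.
move=> H x.
have := @continuous_comp _ _ _ (fun g => (c, g)) (fun z : G * G => mul z.1 z.2) x.
apply; last exact: H.
by apply: cvg_pair; [exact: cvg_cst | exact: cvg_id].
Qed.
Theorem mainTheorem11 (R : realType) (G : ptopologicalType)
  (mul : G -> G -> G) (inv : G -> G) (e : G)
  (mu : {measure set (borel G) -> \bar R}) (P : set G)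
  (X : topologicalType) (act : X -> G -> X) :
  lcsc_group mul inv e -> left_haar mul mu -> semigroup_cond mul inv e P ->
  compact [set: X] -> hausdorff_space X -> right_action mul e P act ->
  admits_haar_system mul inv P act mu ->
  forall (a : G) (U : nat -> set G) (f : nat -> G -> R),
  P a ->
  (forall n, open (U n)) ->
  (forall n, U n.+1 `<=` U n) ->
  \bigcap_n U n = [set a] ->
  (forall V : set G, open V -> V a -> \forall n \near \oo, U n `<=` V) ->
  (forall n, continuous (f n) /\ compact (closure [set g | f n g != 0])) ->
  (forall n g, 0 <= f n g) ->
  (forall n, (\int[mu]_g (f n g)%:E = 1)%E) ->
  (forall n, closure [set g | f n g != 0] `<=`
               U n `&` [set mul b a | b in interior P]) ->
  forall x : X,
    (fun n => (\int[mu]_g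
                (f n g * \1_(Qset mul inv P act x) (inv g))%:E)%E)
      @ \oo --> (\1_(X0a P act a) x)%:E.
Proof.
move=> grp haar sg cX hX ra hs a U f Pa oU decU capU shrink fcont fpos fint fsupp x.
case: grp => assoc unit ginv mulc invc _ _ _.
case: sg => _ Pe Pmul _ _.
case: ra => acte actmul _ actinj.
have supp : forall n g, f n g != 0 -> U n g /\ exists b', interior P b' /\ g = mul b' a.
  move=> n g fg; have [Ug [b' Ib' gE]] := fsupp n g (@subset_closure _ [set g | f n g != 0] g fg).
  by split => //; exists b'; split => //; rewrite gE.
have iP : forall b, interior P b -> P b by move=> b /interior_subset.
have inve : inv e = e by rewrite -(proj2 (unit (inv e))); exact: (proj1 (ginv e)).
case: (pselect (X0a P act a x)) => [[z [b [Ib xE]]]|nX].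
- pose h := fun g => mul b (inv (mul g (inv a))).
  have hc : {for a, continuous h}.
    have c1 := @mulr_cont G mul (inv a) mulc a.
    have c2 := invc (mul a (inv a)).
    have c3 := @mull_cont G mul b mulc (inv (mul a (inv a))).
    exact: (continuous_comp (continuous_comp c1 c2) c3).
  have ha : h a = b by rewrite /h (proj2 (ginv a)) inve (proj2 (unit b)).
  have nV : nbhs a (h @^-1` P).
    by apply: hc; rewrite ha; exact: Ib.
  have := shrink _ (@open_interior _ (h @^-1` P)) nV.
  move=> Hn; apply: cvg_near_cst; move: Hn; apply: filterS => n HU.
  rewrite indicE mem_set; last by exists z, b.
  rewrite -(fint n); congr (integral _ _ _); apply/funext => g.
  have [->|fg] := eqVneq (f n g) 0; first by rewrite GRing.mul0r.
  have [Ug [b' [Ib' gE]]] := supp n g fg.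
  have Hg : h g = mul b (inv b').
    by rewrite /h gE -assoc (proj2 (ginv a)) (proj2 (unit b')).
  have hP : P (h g) := interior_subset (HU g Ug).
  rewrite indicE mem_set ?GRing.mulr1 //.
  exists e, g, (act z (h g)); split => //.
  + by rewrite gE; apply: Pmul => //; exact: iP.
  + by rewrite /= (proj1 (unit _)).
  + rewrite /= acte xE Hg; rewrite Hg in hP.
    transitivity (act (act (act z (mul b (inv b'))) b') a).
      congr act; rewrite actmul //; last exact: iP.
      by rewrite -assoc (proj1 (ginv b')) (proj2 (unit b)).
    by rewrite gE actmul //; exact: iP.
- have -> : (fun n => (\int[mu]_g (f n g * \1_(Qset mul inv P act x) (inv g))%:E)%E)
     = fun _ => 0%E.
    apply/funext => n; apply: integral0_eq => g _.
    have [->|fg] := eqVneq (f n g) 0; first by rewrite GRing.mul0r.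
    have [Ug [b' [Ib' gE]]] := supp n g fg.
    rewrite indicE memNset ?GRing.mulr0 //.
    move=> [c [d [y [Pc Pd /= gd xy]]]].
    apply: nX; exists y, b'; split => //.
    have dE : d = mul g c.
      have : mul g (inv g) = e := proj2 (ginv g).
      rewrite gd assoc => /(congr1 (fun t => mul t d)).
      by rewrite -assoc (proj1 (ginv d)) (proj2 (unit _)) (proj1 (unit d)).
    have Pg : P g by rewrite gE; apply: Pmul => //; exact: iP.
    apply: (actinj c Pc) => /=.
    have Pb' := iP _ Ib'.
    rewrite xy dE; rewrite gE in Pg *.
    by rewrite -(actmul y _ _ Pg Pc) -(actmul y _ _ Pb' Pa).
  rewrite /indic memNset //.
  exact: cvg_cst.
Qed.
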